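(* Let $q\ge 2$ be an integer, $M\in\mathbb{Z}$, $N\in\mathbb{N}$, and let $a_{M+1},\dots,a_{M+N}$ be complex numbers. Then \[ \frac{q}{\varphi(q)}\sum_{\xi\in G_1(q)}\Bigl|\sum_{n=M+1}^{M+N}a_n\,\xi(n)\Bigr|^2 = q\mathop{\sum_{n=M+1}^{M+N}\ \sum_{n'=M+1}^{M+N}}_{\substack{\gcd(nn',q)=1\\ n\equiv n' \ (\mathrm{mod}\ q)}}\overline{a_n}\,a_{n'}\;e\!\left(\frac{\overline{n}}{q}\cdot\frac{n'-n}{q}\right), \] where $\overline{n}$ denotes any integer with $n\overline{n}\equiv 1 \pmod q$ (note $(n'-n)/q$ is an integer in each term). Moreover $G_1(q)$ consists of exactly $\varphi(q)$ characters, namely $\xi_0\chi$ where $\xi_0$ is any fixed element of $G_1(q)$ and $\chi$ runs over the Dirichlet characters modulo $q$ (viewed as characters modulo $q^2$).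
   Context: $e(x)=\exp(2\pi i x)$ and $\varphi$ is Euler's function. For a positive integer $q$, $G_1(q)$ denotes the set of Dirichlet characters $\xi$ modulo $q^2$ such that $\xi(x)=e\!\left(\frac{x-1}{q^2}\right)$ for every integer $x\equiv 1\pmod q$. Dirichlet characters modulo $q^2$ vanish on integers not coprime to $q$. *)

(* Defs.v *)
From HB Require Import structures.
From mathcomp Require Import all_boot all_order all_algebra.
From mathcomp Require Import complex.
From mathcomp Require Import reals trigo.
Set Implicit Arguments. Unset Strict Implicit. Unset Printing Implicit Defensive.
Import Order.TTheory GRing.Theory Num.Theory.
Local Open Scope ring_scope.

Definition e (R : realType) (x : R) : R[i] :=
  Complex (cos (2 * pi * x)) (sin (2 * pi * x)).

Definition dirichlet_char (R : realType) (m : nat) (xi : int -> R[i]) : Prop :=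
  [/\ forall x : int, xi (x + m%:Z) = xi x,
      forall x y : int, xi (x * y) = xi x * xi y,
      xi 1 = 1 &
      forall x : int, (xi x == 0) = ~~ coprimez x m%:Z].

Definition G1 (R : realType) (q : nat) (xi : int -> R[i]) : Prop :=
  dirichlet_char (q ^ 2) xi /\
  forall x : int, (x = 1 %[mod q%:Z])%Z ->
    xi x = e ((x - 1)%:~R / (q ^ 2)%:R).

(* Main.v *)
Require Import Defs.
From HB Require Import structures.
From mathcomp Require Import all_boot all_order all_algebra all_fingroup all_solvable all_field all_character.
From mathcomp Require Import complex.
From mathcomp Require Import boolp reals trigo.
From mathcomp Require Import ring lra zify.
Set Implicit Arguments. Unset Strict Implicit. Unset Printing Implicit Defensive.
Import Order.TTheory GRing.Theory Num.Theory.
Local Open Scope ring_scope.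
Section E.
Variable R : realType.
Lemma eD (x y : R) : e (x + y) = e x * e y.
Proof.
rewrite /e /= !mulrDr cosD sinD; congr Complex; ring.
Qed.
Lemma e0 : e (0 : R) = 1.
Proof. by rewrite /e mulr0 cos0 sin0. Qed.
Lemma e_nat (n : nat) : e (n%:R : R) = 1.
Proof.
elim: n => [|n IH]; first exact: e0.
rewrite -addn1 natrD eD IH mul1r /e mulr1.
have -> : 2 * pi = pi *+ 2 :> R by rewrite mulr_natl.
by rewrite cos2pi sin2pi.
Qed.
Lemma e_int (z : int) : e (z%:~R : R) = 1.
Proof.
case: z => n; first exact: e_nat.
have h := eD (- ((n.+1)%:R)) ((n.+1)%:R).
rewrite addNr e0 e_nat mulr1 in h.
by rewrite NegzE [RHS]h.
Qed.
Lemma eDint (x : R) (z : int) : e (x + z%:~R) = e x.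
Proof. by rewrite eD e_int mulr1. Qed.
Lemma e_neq0 (x : R) : e x != 0.
Proof.
apply/eqP => h; have := eD x (-x); rewrite subrr e0 h mul0r => /eqP.
by rewrite oner_eq0.
Qed.
End E.
Lemma PoszX (a n : nat) : Posz (a ^ n) = (Posz a) ^+ n.
Proof. by elim: n => [|n IH] //; rewrite expnS exprS PoszM IH. Qed.

Section Dir.
Variable R : realType.
Local Notation C := R[i].
Variable m : nat.
Hypothesis m_gt0 : (0 < m)%N.

Lemma coprimez_mod (x y : int) : (x = y %[mod m])%Z -> coprimez x m = coprimez y m.
Proof. by move=> h; rewrite /coprimez -gcdz_modl h gcdz_modl. Qed.

Variable xi : int -> C.
Hypothesis dxi : dirichlet_char m xi.

Lemma dc_per (x k : int) : xi (x + k * m%:Z) = xi x.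
Proof.
case: dxi => per _ _ _.
case: k => n.
  elim: n => [|n IH]; first by rewrite mul0r addr0.
  by rewrite -addn1 PoszD mulrDl mul1r addrA per IH.
have H : forall n : nat, xi (x - n%:Z * m%:Z) = xi x.
  move=> {}n; elim: n => [|n IH]; first by rewrite mul0r subr0.
  rewrite -IH -(per (x - n.+1%:Z * m)); congr xi.
  rewrite -addn1 PoszD mulrDl mul1r; ring.
by rewrite NegzE mulNr H.
Qed.

Lemma dc_mod (x y : int) : (x = y %[mod m])%Z -> xi x = xi y.
Proof.
move=> h; rewrite (divz_eq x m) (divz_eq y m) addrC dc_per addrC dc_per h //.
Qed.

Lemma dcM x y : xi (x * y) = xi x * xi y.
Proof. by case: dxi. Qed.
Lemma dc1 : xi 1 = 1.
Proof. by case: dxi. Qed.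
Lemma dc0 x : ~~ coprimez x m -> xi x = 0.
Proof. by case: dxi => _ _ _ z h; apply/eqP; rewrite z. Qed.
Lemma dc_neq0 x : coprimez x m -> xi x != 0.
Proof. by case: dxi => _ _ _ z h; rewrite z h. Qed.
Lemma dcX x n : xi (x ^+ n) = xi x ^+ n.
Proof. by elim: n => [|n IH]; rewrite ?expr0 ?dc1 // !exprS dcM IH. Qed.

Lemma dc_root x : coprimez x m -> xi x ^+ totient m = 1.
Proof.
move=> cx.
have m0 : m%:Z != 0 by rewrite -lt0n.
have r0 : (0 <= (x %% m)%Z)%R by rewrite modz_ge0.
have -> : xi x = xi (Posz `|(x %% m)%Z|%N).
  by apply: dc_mod; rewrite gez0_abs // modz_mod.
have cr : coprime `|(x %% m)%Z|%N m.
  move: cx; rewrite -(coprimez_mod (modz_mod x m)) coprimezE. done.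
rewrite -dcX -PoszX -dc1; apply: dc_mod.
by rewrite modz_nat (Euler_exp_totient cr) -modz_nat.
Qed.

Lemma dc_norm x : coprimez x m -> `|xi x| = 1.
Proof.
move=> cx; apply/eqP; rewrite -(@pexpr_eq1 _ _ (totient m)) ?totient_gt0 //.
by rewrite -normrX dc_root // normr1.
Qed.

Lemma dc_conj x : coprimez x m -> (xi x)^*%C = (xi x)^-1.
Proof. by move=> cx; rewrite invc_norm dc_norm // expr1n invr1 mul1r. Qed.
End Dir.

Section Count.
Variable R : realType.
Local Notation C := R[i].
Variable m : nat.
Hypothesis m_gt1 : (1 < m)%N.
Let m_gt0 : (0 < m)%N. Proof. exact: ltnW. Qed.

Definition pchar (x : int) : C := if coprimez x m then 1 else 0.

Lemma pchar_dc : dirichlet_char m pchar.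
Proof.
rewrite /pchar; split.
- move=> x; rewrite (@coprimez_mod m (x + m) x) //.
  exact: modzDr.
- by move=> x y; rewrite coprimezMl; case: (coprimez x m); case: (coprimez y m);
    rewrite ?mulr1 ?mul0r ?mulr0.
- by rewrite /coprimez gcdzC /gcdz /= gcdn1.
- by move=> x; case: (coprimez x m); rewrite ?oner_eq0 ?eqxx.
Qed.

Lemma prod_dc (f g : int -> C) : dirichlet_char m f -> dirichlet_char m g ->
  dirichlet_char m (fun x => f x * g x).
Proof.
case=> f1 f2 f3 f4 [g1 g2 g3 g4]; split.
- by move=> x; rewrite f1 g1.
- by move=> x y; rewrite f2 g2; ring.
- by rewrite f3 g3 mulr1.
- by move=> x; rewrite mulf_eq0 f4 g4 orbb.
Qed.

Definition SEP := forall y : int, coprimez y m -> ~~ (y == 1 %[mod m])%Z ->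
  exists chi : int -> C, dirichlet_char m chi /\ chi y != 1.

Variable k : nat.
Variable en : 'I_k -> int -> C.
Hypothesis en_inj : injective en.
Hypothesis en_all : forall f, dirichlet_char m f <-> exists i, f = en i.
Hypothesis sep : SEP.

Lemma en_dc i : dirichlet_char m (en i).
Proof. by apply/en_all; exists i. Qed.

Lemma dc_ext (f g : int -> C) : dirichlet_char m f -> dirichlet_char m g ->
  (forall x, coprimez x m -> f x = g x) -> f = g.
Proof.
move=> df dg h; apply: funext => x; case cx: (coprimez x m); first exact: h.
by rewrite (dc0 df) ?cx // (dc0 dg) ?cx.
Qed.

Lemma sum_en_ne1 y : coprimez y m -> ~~ (y == 1 %[mod m])%Z -> \sum_i en i y = 0.
Proof.
move=> cy ny; have [chi [dchi chy]] := sep cy ny.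
pose s i := proj1_sig (cid ((en_all (fun x => chi x * en i x)).1 (prod_dc dchi (en_dc i)))).
have hs i : (fun x => chi x * en i x) = en (s i) by rewrite /s; case: cid.
have s_inj : injective s.
  move=> i j hij; apply: en_inj; apply: dc_ext; try exact: en_dc.
  move=> x cx; have := congr1 (fun f => f x) (hs i); rewrite hij -(hs j) /=.
  by move/(mulfI (dc_neq0 dchi cx)).
have := @reindex_inj C +%R 0 _ s xpredT (fun i => en i y) s_inj.
under [X in _ = X -> _]eq_bigr => i _ do rewrite -(hs i).
rewrite -mulr_sumr => /eqP; rewrite -subr_eq0 -{1}[\sum_i en i y]mul1r -mulrBl mulf_eq0.
by rewrite subr_eq0 eq_sym (negbTE chy) => /eqP.
Qed.

Lemma sum_en_1 y : (y = 1 %[mod m])%Z -> \sum_i en i y = k%:R.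
Proof.
move=> hy; rewrite (eq_bigr (fun _ => 1)); last by move=> i _; rewrite (dc_mod (en_dc i) hy) (dc1 (en_dc i)).
by rewrite sumr_const card_ord.
Qed.

Lemma count_en : k = totient m.
Proof.
pose S := \sum_(x < m) \sum_i en i (Posz x).
have S1 : S = k%:R.
  rewrite /S (bigD1 (Ordinal m_gt1)) //= sum_en_1 // big1 ?addr0 //.
  move=> x nx; case cx: (coprimez (Posz x) m).
    apply: sum_en_ne1 => //.
    apply/negP => /eqP; rewrite !modz_nat !modn_small ?ltn_ord // => -[] h.
    by move/eqP: nx; apply; apply/val_inj.
  by apply: big1 => i _; exact: (dc0 (en_dc i) (negbT cx)).
have S2 : S = (totient m)%:R.
  rewrite /S exchange_big /=.
  have [i0 hi0] := (en_all pchar).1 pchar_dc.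
  rewrite (bigD1 i0) //= [X in _ + X]big1 ?addr0.
    rewrite -hi0 /pchar totient_count_coprime big_mkord natr_sum.
    by apply: eq_bigr => x _; rewrite coprimezE /= coprime_sym; case: coprime.
  move=> i ni.
  case: (pselect (exists a, coprimez a m /\ en i a != 1)) => [[a [ca na]] | nex]; last first.
    exfalso; move/eqP: ni; apply; apply: en_inj; rewrite -hi0.
    apply: (dc_ext (en_dc i) pchar_dc) => x cx; rewrite /pchar cx.
    by apply/eqP/negPn/negP => h; apply: nex; exists x.
  pose a' := `|(a %% m)%Z|%N.
  have ha' : Posz a' = (a %% m)%Z by rewrite gez0_abs // modz_ge0 // -lt0n.
  have ca' : coprime a' m.
    by move: ca; rewrite -(coprimez_mod (modz_mod a m)) coprimezE -ha'.
  pose b := (a' ^ (totient m).-1)%N.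
  have hb : ((b * a') %% m = 1 %% m)%N.
    by rewrite /b -expnSr prednK ?totient_gt0 // Euler_exp_totient.
  pose sig (x : 'I_m) := Ordinal (ltn_pmod (a' * x)%N m_gt0).
  pose tau (x : 'I_m) := Ordinal (ltn_pmod (b * x)%N m_gt0).
  have ts : cancel sig tau.
    move=> x; apply/val_inj => /=.
    by rewrite modnMmr mulnA -modnMml hb modnMml mul1n modn_small.
  have sig_inj : injective sig := can_inj ts.
  have hsig x : en i (Posz (sig x)) = en i a * en i (Posz x).
    rewrite /= -(dcM (en_dc i)); apply: (dc_mod (en_dc i)).
    by rewrite modz_nat modn_mod -modz_nat PoszM ha' modzMml.
  have := @reindex_inj C +%R 0 _ sig xpredT (fun x => en i (Posz x)) sig_inj.
  under [X in _ = X -> _]eq_bigr => x _ do rewrite hsig.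
  rewrite -mulr_sumr => /eqP.
  rewrite -subr_eq0 -{1}[\sum_(x < m) en i (Posz x)]mul1r -mulrBl mulf_eq0.
  by rewrite subr_eq0 eq_sym (negbTE na) => /eqP.
by apply/eqP; rewrite -(eqr_nat C) -S1 -S2.
Qed.
End Count.

Lemma prim_root_exists (F : numClosedFieldType) n : (0 < n)%N -> exists z : F, n.-primitive_root z.
Proof.
pose p : {poly F} := 'X^n - 1; have [r Dp] := closed_field_poly_normal p.
move=> n_gt0; rewrite (monicP _) ?monicXnsubC // scale1r in Dp.
have rn1: all n.-unity_root r by apply/allP=> z; rewrite -root_prod_XsubC -Dp.
have sz_r: (n < (size r).+1)%N.
  by rewrite -(size_prod_XsubC r id) -Dp size_XnsubC.
have [|z] := hasP (has_prim_root n_gt0 rn1 _ sz_r); last by exists z.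
by rewrite -separable_prod_XsubC -Dp separable_Xn_sub_1 // pnatr_eq0 -lt0n.
Qed.

Lemma mod_ord (m : nat) (x : int) : (0 < m)%N ->
  (`|(x %% m)%Z| < m)%N /\ (x = Posz `|(x %% m)%Z| %[mod m])%Z.
Proof.
move=> m0; have mz : m%:Z != 0 by rewrite -lt0n.
have ge : (0 <= (x %% m)%Z)%R by rewrite modz_ge0.
split; last by rewrite gez0_abs // modz_mod.
by rewrite -ltz_nat gez0_abs // ltz_pmod // ltz_nat.
Qed.

Section Fin.
Variable R : realType.
Local Notation C := R[i].

Lemma fin_enum (T : finType) (P : (int -> C) -> Prop) (code : (int -> C) -> T) :
  (forall f g, P f -> P g -> code f = code g -> f = g) ->
  exists k (en : 'I_k -> int -> C), injective en /\ forall f, P f <-> exists i, f = en i.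
Proof.
move=> cinj.
pose S := [set t : T | `[< exists f, P f /\ code f = t >]].
pose dec (t : T) : int -> C := match pselect (exists f, P f /\ code f = t) with
  | left h => proj1_sig (cid h) | right _ => fun _ => 0 end.
have decP t : t \in S -> P (dec t) /\ code (dec t) = t.
  rewrite inE => /asboolP h; rewrite /dec; case: pselect => // h'.
  by case: cid.
exists #|S|, (fun i => dec (enum_val i)); split.
- move=> i j /= h; apply: enum_val_inj.
  have [_ ci] := decP _ (enum_valP i); have [_ cj] := decP _ (enum_valP j).
  by rewrite -ci -cj h.
- move=> f; split.
  + move=> pf; have fS : code f \in S by rewrite inE; apply/asboolP; exists f.
    exists (enum_rank_in fS (code f)); rewrite enum_rankK_in //.
    have [pd cd] := decP _ fS; apply: cinj => //; by rewrite cd.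
  + by case=> i ->; have [] := decP _ (enum_valP i).
Qed.

Lemma dc_fin (m : nat) : (0 < m)%N -> exists k (en : 'I_k -> int -> C),
  injective en /\ forall f, dirichlet_char m f <-> exists i, f = en i.
Proof.
move=> m0; pose N := totient m; have N0 : (0 < N)%N by rewrite totient_gt0.
have [w pw] := prim_root_exists C N0.
pose code (f : int -> C) : {ffun 'I_m -> option 'I_N} :=
  [ffun x : 'I_m => [pick j : 'I_N | f (Posz x) == w ^+ j]].
have := (@fin_enum _ (dirichlet_char m) code); apply => f g df dg hc.
have key (x : 'I_m) : f (Posz x) = g (Posz x).
  have := congr1 (fun F : {ffun 'I_m -> option 'I_N} => F x) hc; rewrite /= !ffunE.
  case: pickP => [j /eqP fj | nf]; case: pickP => [j' /eqP gj' | ng] //.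
  - by move=> [hj]; rewrite fj gj' hj.
  - move=> _; case cx: (coprimez (Posz x) m).
      have [j hj] := prim_rootP pw (dc_root m0 df cx).
      by have := nf j; rewrite hj eqxx.
    by rewrite (dc0 df) ?cx // (dc0 dg) ?cx.
apply: funext => x; have [lt hx] := mod_ord x m0.
by rewrite (dc_mod df hx) (dc_mod dg hx) (key (Ordinal lt)).
Qed.
End Fin.

Lemma lin_sep (gT : finGroupType) (G : {group gT}) : abelian G ->
  forall g, g \in G -> g != 1%g -> exists i : Iirr G, 'chi_i g != 1.
Proof.
move=> abG g gG ng.
case: (boolP [exists i : Iirr G, 'chi_i g != 1]) => [/existsP [i hi]|]; first by exists i.
rewrite negb_exists => /forallP all1.
have := cfRegE G g; rewrite (negbTE ng) mulr0n cfReg_sum sum_cfunE.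
rewrite (eq_bigr (fun _ => 1)); last first.
  move=> i _; rewrite cfunE lin_char1 ?(char_abelianP G abG) // mul1r.
  by apply/eqP; move: (all1 i); rewrite negbK.
rewrite sumr_const card_ord => /eqP; rewrite pnatr_eq0 => /eqP h.
by [].
Qed.

Section ZpUnit.
Variable m : nat.
Hypothesis m_gt1 : (1 < m)%N.
Let m_gt0 : (0 < m)%N. Proof. exact: ltnW. Qed.

Lemma zcast_mod (x : int) : (x%:~R : 'Z_m) = (`|(x %% m)%Z|%N)%:R.
Proof.
have mz : m%:Z != 0 by rewrite -lt0n.
have ge : (0 <= (x %% m)%Z)%R by rewrite modz_ge0.
rewrite {1}(divz_eq x m) intrD intrM.
have -> : ((Posz m)%:~R : 'Z_m) = 0 by exact: pchar_Zp.
by rewrite mulr0 add0r -{1}(gez0_abs ge).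
Qed.

Lemma zcast_eq (x y : int) : ((x%:~R : 'Z_m) == y%:~R) = (x == y %[mod m])%Z.
Proof.
rewrite !zcast_mod -!(inj_eq val_inj) /= !val_Zp_nat //.
have [lx _] := mod_ord x m_gt0; have [ly _] := mod_ord y m_gt0.
rewrite !modn_small //.
have mz : m%:Z != 0 by rewrite -lt0n.
rewrite -eqz_nat !gez0_abs // modz_ge0 //.
Qed.

Lemma zcast_unit (x : int) : ((x%:~R : 'Z_m) \is a GRing.unit) = coprimez x m.
Proof.
rewrite zcast_mod unitZpE // coprime_sym.
by rewrite -(coprimez_mod (modz_mod x m)) coprimezE.
Qed.
End ZpUnit.

Section Sep.
Variable R : realType.
Local Notation C := R[i].
Variable m : nat.
Hypothesis m_gt1 : (1 < m)%N.
Local Notation U := {unit 'Z_m}.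

Definition toU (x : int) : U := insubd (1%g : U) (x%:~R : 'Z_m).

Lemma coprime1z_m : coprimez 1 m.
Proof. by rewrite /coprimez gcdzC /gcdz /= gcdn1. Qed.

Lemma toU_val x : coprimez x m -> val (toU x) = x%:~R.
Proof. by move=> cx; rewrite val_insubd /= zcast_unit // cx. Qed.

Lemma toUM x y : coprimez x m -> coprimez y m -> toU (x * y) = (toU x * toU y)%g.
Proof.
move=> cx cy; apply: val_inj.
by rewrite FinRing.val_unitM !toU_val ?coprimezMl ?cx ?cy // intrM.
Qed.

Lemma toU_mod x y : (x = y %[mod m])%Z -> toU x = toU y.
Proof. by move=> h; rewrite /toU; congr insubd; apply/eqP; rewrite zcast_eq // h. Qed.

Lemma toU1 : toU 1 = 1%g.
Proof. by apply: val_inj; rewrite toU_val ?coprime1z_m. Qed.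

Lemma toU_ne1 y : coprimez y m -> ~~ (y == 1 %[mod m])%Z -> toU y != 1%g.
Proof.
move=> cy; apply: contra => /eqP h; have := congr1 val h.
by rewrite toU_val // FinRing.val_unit1 => hv; rewrite -zcast_eq // hv.
Qed.

Lemma sep_Zm : @SEP R m.
Proof.
move=> y cy ny.
pose G := [set: U]%G.
have abG : abelian G.
  by apply/centsP => a _ b _; apply/val_inj => /=; rewrite mulrC.
have [i hi] := lin_sep abG (in_setT (toU y)) (toU_ne1 cy ny).
pose n := #|G|; have n0 : (0 < n)%N by rewrite cardG_gt0.
have [z pz] := prim_root_exists algC n0.
have [w pw] := prim_root_exists C n0.
pose phi (c : algC) : C := if [pick j : 'I_n | c == z ^+ j] is Some j then w ^+ j else 0.
have phiE j : phi (z ^+ j) = w ^+ j.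
  rewrite /phi; case: pickP => [j' /eqP hj | nj].
    by apply/eqP; rewrite (eq_prim_root_expr pw) -(eq_prim_root_expr pz) hj eqxx.
  have := nj (Ordinal (ltn_pmod j n0)).
  by rewrite /= (eq_prim_root_expr pz) modn_mod eqxx.
have lin j : 'chi_j \is a linear_char := char_abelianP G abG j.
have chiz (u : U) : exists j : nat, 'chi_i u = z ^+ j.
  have : 'chi_i u ^+ n = 1.
    by rewrite -(lin_charX (lin i)) ?in_setT // expg_cardG ?in_setT // (lin_char1 (lin i)).
  by move/(prim_rootP pz) => [j ->]; exists j.
have wn0 : w != 0 by rewrite (prim_root_eq0 pw) -lt0n.
pose chi (x : int) : C := if coprimez x m then phi ('chi_i (toU x)) else 0.
exists chi; split; first split.
- by move=> x; rewrite /chi (coprimez_mod (modzDr x m)) (toU_mod (modzDr x m)).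
- move=> x x'; rewrite /chi coprimezMl.
  case cx: (coprimez x m); case cx': (coprimez x' m); rewrite ?mulr0 ?mul0r //=.
  rewrite toUM // (lin_charM (lin i)) ?in_setT //.
  have [a ->] := chiz (toU x); have [b ->] := chiz (toU x').
  by rewrite -exprD !phiE exprD.
- by rewrite /chi coprime1z_m toU1 (lin_char1 (lin i)) -(expr0 z) phiE expr0.
- move=> x; rewrite /chi; case cx: (coprimez x m) => /=; last by rewrite eqxx.
  have [a ->] := chiz (toU x).
  by rewrite phiE expf_eq0 (negbTE wn0) andbF.
- rewrite /chi cy; have [a ha] := chiz (toU y).
  rewrite ha phiE; move: hi; rewrite ha; apply: contra => /eqP h.
  by rewrite -(expr0 z) (eq_prim_root_expr pz) -(eq_prim_root_expr pw) h expr0.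
Qed.
End Sep.

Lemma modzE (x y d : int) : (x = y %[mod d])%Z <-> exists s, x = y + s * d.
Proof.
split.
  move=> h; have /dvdzP [s hs] : (d %| x - y)%Z by rewrite -eqz_mod_dvd; apply/eqP.
  by exists s; rewrite -hs; ring.
by case=> s ->; rewrite addrC modzMDl.
Qed.

Lemma inv_mod (x : int) (m : nat) : coprimez x m -> exists x', (x * x' = 1 %[mod m])%Z.
Proof.
move=> cx; have [u [v huv]] := Bezoutz x m.
move: cx; rewrite /coprimez => /eqP g1; rewrite g1 in huv.
by exists u; apply/modzE; exists (- v); rewrite -huv; ring.
Qed.

Section Main.
Variable R : realType.
Local Notation C := R[i].
Variable q : nat.
Hypothesis q_gt1 : (1 < q)%N.
Let q_gt0 : (0 < q)%N. Proof. exact: ltnW. Qed.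
Local Notation Q := (q ^ 2)%N.
Let Q_gt1 : (1 < Q)%N.
Proof. by rewrite (expnS q 1) expn1; apply: (ltn_trans q_gt1); rewrite -{1}[q]muln1 ltn_pmul2l. Qed.
Let Q_gt0 : (0 < Q)%N. Proof. exact: ltnW. Qed.
Let QE : Posz Q = q%:Z * q%:Z.
Proof. by rewrite PoszX expr2. Qed.

Lemma coprimeQ x : coprimez x Q = coprimez x q.
Proof. by rewrite !coprimezE /= (expnS q 1) expn1 coprimeMr andbb. Qed.

Lemma modQq x y : (x = y %[mod Q])%Z -> (x = y %[mod q])%Z.
Proof. by move/modzE=> [s ->]; apply/modzE; exists (s * q); rewrite QE; ring. Qed.

Lemma G1_dc (xi : int -> C) : G1 q xi -> dirichlet_char Q xi.
Proof. by case. Qed.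

Lemma G1_val (xi : int -> C) x : G1 q xi -> (x = 1 %[mod q])%Z -> xi x = e ((x - 1)%:~R / (Q%:R : R)).
Proof. by case=> _ h; apply: h. Qed.

Lemma part3a (xi0 xi : int -> C) : G1 q xi0 -> G1 q xi ->
  dirichlet_char q (fun x => xi x / xi0 x) /\ xi = (fun x => xi0 x * (xi x / xi0 x)).
Proof.
move=> g0 g; have d0 := G1_dc g0; have d := G1_dc g.
split; last first.
  apply: funext => x; case cx: (coprimez x q).
    by rewrite mulrC divfK // (dc_neq0 d0) // coprimeQ.
  by rewrite (dc0 d) ?coprimeQ ?cx // (dc0 d0) ?coprimeQ ?cx // mul0r.
split.
- move=> x; case cx: (coprimez x q); last first.
    have cx' : coprimez (x + q) q = false by rewrite (coprimez_mod (modzDr x q)).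
    by rewrite (dc0 d) ?coprimeQ ?cx ?cx' // (dc0 d) ?coprimeQ ?cx ?cx' // !mul0r.
  have [x' hx'] : exists x', (x * x' = 1 %[mod Q])%Z by apply: inv_mod; rewrite coprimeQ.
  pose u := 1 + x' * q.
  have hu : (x + q = x * u %[mod Q])%Z.
    move/modzE: hx' => [s hs]; apply/modzE; exists (- (s * q)).
    rewrite /u mulrDr mulr1 mulrA hs QE; ring.
  have u1 : (u = 1 %[mod q])%Z by apply/modzE; exists x'; rewrite /u addrC.
  have eu : xi u = xi0 u by rewrite (G1_val g u1) (G1_val g0 u1).
  have nu : xi0 u != 0 by rewrite (G1_val g0 u1) e_neq0.
  by rewrite (dc_mod d hu) (dc_mod d0 hu) (dcM d) (dcM d0) eu invfM mulrACA divff // mulr1.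
- by move=> x y; rewrite (dcM d) (dcM d0) invfM mulrACA.
- by rewrite (dc1 d) (dc1 d0) invr1 mulr1.
- move=> x; rewrite mulf_eq0 invr_eq0.
  case: d => _ _ _ ->; case: d0 => _ _ _ ->; by rewrite coprimeQ orbb.
Qed.

Lemma part3b (xi0 chi : int -> C) : G1 q xi0 -> dirichlet_char q chi -> G1 q (fun x => xi0 x * chi x).
Proof.
move=> g0 dchi; have d0 := G1_dc g0; split.
  split.
  - move=> x; case: d0 => -> _ _ _; congr (_ * _).
    by apply: (dc_mod dchi); apply: modQq; apply: modzDr.
  - by move=> x y; rewrite (dcM d0) (dcM dchi); ring.
  - by rewrite (dc1 d0) (dc1 dchi) mulr1.
  - move=> x; rewrite mulf_eq0.
    by case: dchi => _ _ _ ->; case: d0 => _ _ _ ->; rewrite coprimeQ orbb.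
move=> x hx; rewrite (dc_mod dchi hx) (dc1 dchi) mulr1.
by apply: G1_val.
Qed.
End Main.

Lemma e_pow (R : realType) (x : R) n : e x ^+ n = e (x *+ n).
Proof.
elim: n => [|n IH]; first by rewrite expr0 mulr0n e0.
by rewrite exprS IH -eD mulrS.
Qed.

Section Exist.
Variable R : realType.
Local Notation C := R[i].
Variable q : nat.
Hypothesis q_gt1 : (1 < q)%N.
Let q_gt0 : (0 < q)%N. Proof. exact: ltnW. Qed.
Local Notation Q := (q ^ 2)%N.
Let Q_gt1 : (1 < Q)%N.
Proof. by rewrite (expnS q 1) expn1; apply: (ltn_trans q_gt1); rewrite -{1}[q]muln1 ltn_pmul2l. Qed.
Let Q_gt0 : (0 < Q)%N. Proof. exact: ltnW. Qed.
Let QE : Posz Q = q%:Z * q%:Z.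
Proof. by rewrite PoszX expr2. Qed.

Lemma pow_g (n : nat) : ((1 + q%:Z) ^+ n = 1 + n%:Z * q %[mod Q])%Z.
Proof.
elim: n => [|n IH]; first by rewrite expr0 mul0r addr0.
rewrite exprS mulrC -modzMml IH modzMml.
by apply/modzE; exists n%:Z; rewrite QE -[n.+1]addn1 PoszD; ring.
Qed.

Lemma g_ne1 (j : nat) : (0 < j < q)%N -> ~~ ((1 + q%:Z) ^+ j == 1 %[mod Q])%Z.
Proof.
move=> /andP [j0 jq]; apply/negP => /eqP h.
have := pow_g j; rewrite h.
have -> : 1 + j%:Z * q%:Z = Posz (1 + j * q)%N by rewrite PoszD PoszM.
rewrite !modz_nat => -[].
have lt : (1 + j * q < Q)%N by rewrite (expnS q 1) expn1; nia.
rewrite !modn_small //; lia.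
Qed.

Lemma G1_exists : exists xi0 : int -> C, G1 q xi0.
Proof.
have [k [en [inj all]]] := dc_fin R Q_gt0.
have sep := sep_Zm R Q_gt1.
have kE := count_en Q_gt1 inj all sep.
pose g := 1 + q%:Z.
pose z : C := e ((q%:R : R)^-1).
have qR0 : (q%:R : R) != 0 by rewrite pnatr_eq0 -lt0n.
have zq : z ^+ q = 1.
  have h1 : (q%:R : R)^-1 *+ q = 1.
    by rewrite -[(q%:R)^-1 *+ q]mulr_natr mulVf.
  rewrite /z e_pow h1.
  exact: (e_nat R 1).
have z0 : z != 0 := e_neq0 _.
have cg : coprimez g Q.
  by rewrite coprimeQ (coprimez_mod (modzDr 1 q)) coprime1z_m.
have gq : (g ^+ q = 1 %[mod Q])%Z.
  by rewrite pow_g; apply/modzE; exists 1; rewrite QE; ring.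
have den i : dirichlet_char Q (en i) by apply/all; exists i.
pose u i := en i g / z.
have enu i : en i g = u i * z by rewrite /u divfK.
have uq i : u i ^+ q = 1.
  rewrite /u exprMn exprVn zq invr1 mulr1 -(dcX (den i)) (dc_mod (den i) gq).
  exact: (dc1 (den i)).
have inner i : \sum_(j < q) u i ^+ j = if en i g == z then q%:R else 0.
  case: eqP => h.
    have u1 : u i = 1 by rewrite /u h divff.
    by rewrite (eq_bigr (fun _ => 1)) ?sumr_const ?card_ord // => j _; rewrite u1 expr1n.
  have hne : u i - 1 != 0.
    by rewrite subr_eq0; apply/eqP => h1; apply: h; rewrite enu h1 mul1r.
  have := subrX1 (u i) q; rewrite uq subrr => /esym /eqP.
  by rewrite mulf_eq0 (negbTE hne) /= => /eqP.
have total : \sum_i \sum_(j < q) u i ^+ j = k%:R.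
  rewrite exchange_big /= (bigD1 (Ordinal q_gt0)) //= [X in _ + X]big1 ?addr0.
    by rewrite (eq_bigr (fun _ => 1)) ?sumr_const ?card_ord // => i _; rewrite expr0.
  move=> j nj.
  have -> : \sum_i u i ^+ j = (\sum_i en i (g ^+ j)) * (z ^+ j)^-1.
    rewrite mulr_suml; apply: eq_bigr => i _.
    by rewrite /u exprMn exprVn (dcX (den i)).
  rewrite (sum_en_ne1 inj all sep) ?mul0r //.
    exact: coprimezXl.
  apply: g_ne1; rewrite ltn_ord andbT lt0n; apply: contra nj => /eqP j0.
  by apply/eqP/val_inj.
case: (boolP [exists i, en i g == z]) => [/existsP [i /eqP hi] | ]; last first.
  rewrite negb_exists => /forallP nall.
  move: total; rewrite (eq_bigr (fun _ => 0)); last first.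
    by move=> i _; rewrite inner (negbTE (nall i)).
  rewrite big1_eq => /esym /eqP; rewrite pnatr_eq0 kE => /eqP h.
  by have := totient_gt0 Q; rewrite h Q_gt0.
exists (en i); split; first exact: den.
move=> x /modzE [t ht].
have [lt ht0] := mod_ord t q_gt0.
set t0 := `|(t %% q)%Z|%N in lt ht0.
move/modzE: ht0 => [s hs].
have hx : (x = g ^+ t0 %[mod Q])%Z.
  rewrite pow_g; apply/modzE; exists s; rewrite ht hs QE; ring.
rewrite (dc_mod (den i) hx) (dcX (den i)) hi /z e_pow -[_ *+ t0]mulr_natl.
have -> : x - 1 = (t0%:Z + s * q%:Z) * q%:Z by rewrite ht hs; ring.
rewrite intrM intrD intrM natrX.
have -> : ((Posz t0)%:~R + s%:~R * (Posz q)%:~R) * (Posz q)%:~R / (q%:R : R) ^+ 2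
   = t0%:R * (q%:R)^-1 + s%:~R.
  by rewrite -!pmulrn; field; exact: qR0.
by rewrite [RHS]eDint.
Qed.
End Exist.

Section Key.
Variable R : realType.
Local Notation C := R[i].
Variable q : nat.
Hypothesis q_gt1 : (1 < q)%N.
Let q_gt0 : (0 < q)%N. Proof. exact: ltnW. Qed.
Local Notation Q := (q ^ 2)%N.
Let Q_gt1 : (1 < Q)%N.
Proof. by rewrite (expnS q 1) expn1; apply: (ltn_trans q_gt1); rewrite -{1}[q]muln1 ltn_pmul2l. Qed.
Let Q_gt0 : (0 < Q)%N. Proof. exact: ltnW. Qed.
Let QE : Posz Q = q%:Z * q%:Z.
Proof. by rewrite PoszX expr2. Qed.

Variable xi0 : int -> C.
Hypothesis g0 : G1 q xi0.
Variable k : nat.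
Variable en : 'I_k -> int -> C.
Hypothesis inj : injective en.
Hypothesis all : forall xi, G1 q xi <-> exists i, xi = en i.
Variable nbar : int -> int.
Hypothesis hnbar : forall n : int, coprimez n q%:Z -> (n * nbar n = 1 %[mod q%:Z])%Z.

Let enc i x := en i x / xi0 x.
Let gen i : G1 q (en i). Proof. by apply/all; exists i. Qed.
Let dec i : dirichlet_char q (enc i). Proof. exact: (part3a g0 (gen i)).1. Qed.
Let enE i : en i = (fun x => xi0 x * enc i x). Proof. exact: (part3a g0 (gen i)).2. Qed.
Let inj' : injective enc.
Proof. by move=> i j h; apply: inj; rewrite (enE i) (enE j) h. Qed.
Let all' : forall f, dirichlet_char q f <-> exists i, f = enc i.
Proof.
move=> f; split => [df | [i ->] //].
have [i hi] := (all _).1 (part3b g0 df); exists i.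
apply: funext => x; rewrite /enc -hi; case cx: (coprimez x q).
  by rewrite [xi0 x * _]mulrC mulfK // (dc_neq0 (G1_dc g0)) // coprimeQ.
by rewrite (dc0 df) ?cx // mulr0 mul0r.
Qed.

Lemma k_tot : k = totient q.
Proof. exact: (count_en q_gt1 inj' all' (sep_Zm R q_gt1)). Qed.

Lemma key (n n' : int) : \sum_i (en i n)^*%C * en i n' =
  if coprimez (n * n') q && (n == n' %[mod q])%Z
  then k%:R * e ((nbar n)%:~R / (q%:R : R) * ((n' - n)%:~R / q%:R)) else 0.
Proof.
case cnn: (coprimez (n * n') q) => /=; last first.
  apply: big1 => i _; move: cnn; rewrite coprimezMl.
  have dQ := G1_dc (gen i).
  case cn: (coprimez n q) => /= cn'.
    by rewrite (dc0 dQ (x := n')) ?coprimeQ ?cn' // mulr0.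
  by rewrite (dc0 dQ (x := n)) ?coprimeQ ?cn // conjc0 mul0r.
move: cnn; rewrite coprimezMl => /andP [cn cn'].
have [ns hns] : exists ns, (n * ns = 1 %[mod Q])%Z by apply: inv_mod; rewrite coprimeQ.
pose y := ns * n'.
have term i : (en i n)^*%C * en i n' = en i y.
  have dQ := G1_dc (gen i).
  have nz : en i n != 0 by rewrite (dc_neq0 dQ) // coprimeQ.
  rewrite (dc_conj Q_gt0 dQ) ?coprimeQ // /y (dcM dQ); congr (_ * _).
  apply: (mulfI nz); rewrite mulfV // -(dcM dQ) (dc_mod dQ hns) (dc1 dQ) //.
rewrite (eq_bigr _ (fun i _ => term i)).
have cy : coprimez y q.
  rewrite /y coprimezMl cn' andbT.
  have := hns; move/modQq/(coprimez_mod) => h; move: (coprime1z_m q); rewrite -h coprimezMl.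
  by case/andP.
rewrite (eq_bigr (fun i => xi0 y * enc i y)); last by move=> i _; rewrite {1}(enE i).
rewrite -mulr_sumr.
have [s1 hs1] := (modzE _ _ _).1 hns.
have [s2 hs2] := (modzE _ _ _).1 (hnbar cn).
case: ifP => hmod.
  have [t ht] := (modzE n' n q).1 (esym (eqP hmod)).
  have hy : (y = 1 %[mod q])%Z.
    by apply/modzE; exists (s1 * q + ns * t); rewrite /y ht mulrDr mulrC hs1 QE; ring.
  rewrite (sum_en_1 all' hy) (G1_val g0 hy) mulrC; congr (_ * _).
  pose s3 := nbar n * s1 * q - ns * s2.
  have hns3 : ns = nbar n + s3 * q.
    rewrite /s3.
    have e1 : ns * (n * nbar n) = nbar n * (n * ns) by ring.
    move: e1; rewrite hs2 hs1 QE => e1.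
    have e2 : ns = ns * (1 + s2 * q) - ns * s2 * q by ring.
    rewrite {1}e2 e1; ring.
  have -> : y - 1 = nbar n * t * q + (s1 + s3 * t) * (q * q).
    rewrite /y ht mulrDr mulrC hs1 QE hns3; ring.
  have -> : n' - n = t * q by rewrite ht; ring.
  rewrite intrD !intrM natrX.
  have qR0 : (q%:R : R) != 0 by rewrite pnatr_eq0 -lt0n.
  set A := (_ / q%:R ^+ 2).
  have -> : A = (nbar n)%:~R / q%:R * (t%:~R * (Posz q)%:~R / q%:R) + (s1 + s3 * t)%:~R.
    by rewrite /A ?intrM -?pmulrn ?natrM; field; exact: qR0.
  by rewrite eDint.
rewrite (sum_en_ne1 inj' all' (sep_Zm R q_gt1)) ?mulr0 //.
apply/negP => /eqP hy; move/negbT: hmod => /negP; apply; apply/eqP.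
have [s4 hs4] := (modzE _ _ _).1 hy.
apply/esym/modzE; exists (n * s4 - s1 * q * n').
have h : n * y = n' + s1 * (q * q) * n' by rewrite /y mulrA hs1 QE; ring.
rewrite hs4 in h.
have h2 : n' = n * (1 + s4 * q) - s1 * (q * q) * n' by rewrite h; ring.
rewrite {1}h2; ring.
Qed.
End Key.

Lemma part1 (R : realType) (q : nat) : (1 < q)%N ->
  exists (k : nat) (en : 'I_k -> int -> R[i]),
      injective en /\ forall xi, G1 q xi <-> exists i, xi = en i.
Proof.
move=> q1; have q0 : (0 < q)%N by exact: ltnW.
have [xi0 g0] := G1_exists R q1.
have [k [en [inj all]]] := dc_fin R q0.
have den i : dirichlet_char q (en i) by apply/all; exists i.
exists k, (fun i x => xi0 x * en i x); split.
  move=> i j h; apply: inj; apply: funext => x; case cx: (coprimez x q).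
    have := congr1 (fun f => f x) h => /=.
    by apply: mulfI; rewrite (dc_neq0 (G1_dc g0)) // coprimeQ.
  by rewrite (dc0 (den i)) ?cx // (dc0 (den j)) ?cx.
move=> xi; split.
  move=> gxi; have [dchi exi] := part3a g0 gxi.
  have [i hi] := (all _).1 dchi; exists i; rewrite {1}exi.
  by apply: funext => x; rewrite -hi.
by case=> i ->; apply: part3b g0 (den i).
Qed.

Unset Implicit Arguments.

Theorem mainTheorem1 (R : realType) (q : nat) (M : int) (N : nat)
    (a : int -> R[i]) (nbar : int -> int) :
  (2 <= q)%N ->
  (forall n : int, coprimez n q%:Z -> (n * nbar n = 1 %[mod q%:Z])%Z) ->
  (* G_1(q) is finite: it has an injective enumeration *)
  (exists (k : nat) (en : 'I_k -> int -> R[i]),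
      injective en /\ forall xi, G1 q xi <-> exists i, xi = en i)
  /\
  (* for every injective enumeration of G_1(q): it has phi(q) elements,
     and the identity holds *)
  (forall (k : nat) (en : 'I_k -> int -> R[i]),
      injective en -> (forall xi, G1 q xi <-> exists i, xi = en i) ->
      k = totient q /\
      (q%:R / (totient q)%:R) *
        \sum_(i < k) `| \sum_(j < N) a (M + (j.+1)%:Z) * en i (M + (j.+1)%:Z) | ^+ 2
      = q%:R *
        \sum_(j < N) \sum_(j' < N |
            let n := M + (j.+1)%:Z in let n' := M + (j'.+1)%:Z in
            coprimez (n * n') q%:Z && (n == n' %[mod q%:Z])%Z)
          (let n := M + (j.+1)%:Z in let n' := M + (j'.+1)%:Z in
           conjc (a n) * a n' *
             e ((nbar n)%:~R / q%:R * ((n' - n)%:~R / q%:R))))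
  /\
  (* G_1(q) = { xi0 * chi : chi Dirichlet character mod q } for any xi0 in G_1(q) *)
  (forall xi0 : int -> R[i], G1 q xi0 ->
     forall xi : int -> R[i],
       G1 q xi <-> exists chi : int -> R[i],
                     dirichlet_char q chi /\ xi = (fun x => xi0 x * chi x)).
Proof.
move=> q1 hnbar.
have [xi0 g0] := G1_exists R q1.
split; first exact: part1.
split; last first.
  move=> xi1 g1 xi; split.
    move=> gxi; have [dchi exi] := part3a g1 gxi.
    by exists (fun x => xi x / xi1 x).
  by case=> chi [dchi ->]; apply: part3b g1 dchi.
move=> k en inj all.
have kE := k_tot q1 g0 inj all.
split; first exact: kE.
have tR : ((totient q)%:R : R[i]) != 0 by rewrite pnatr_eq0 -lt0n totient_gt0 ltnW.
rewrite -kE in tR *.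
transitivity ((q%:R / k%:R) * \sum_(j < N) \sum_(j' < N)
   (a (M + (j.+1)%:Z))^*%C * a (M + (j'.+1)%:Z) *
   \sum_(i < k) (en i (M + (j.+1)%:Z))^*%C * en i (M + (j'.+1)%:Z)).
  congr (_ * _).
  under eq_bigr => i _ do rewrite sqr_normc mulrC rmorph_sum mulr_suml.
  rewrite exchange_big /=; apply eq_bigr => j _.
  under eq_bigr => i _ do rewrite mulr_sumr.
  rewrite exchange_big /=; apply eq_bigr => j' _.
  rewrite mulr_sumr; apply eq_bigr => i _.
  by rewrite rmorphM /=; ring.
rewrite !mulr_sumr; apply eq_bigr => j _.
rewrite [in RHS]big_mkcond /= !mulr_sumr; apply eq_bigr => j' _.
rewrite (key q1 g0 inj all hnbar) /=.
case: ifP => _; last by rewrite !mulr0.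
by field.
Qed.
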